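(* Let $n\ge 1$, $a=(a_1,\dots,a_n)\in\mathbb{R}^n$, $\omega=(\omega_1,\dots,\omega_n)\in\mathbb{R}^n$, $\varphi=(\varphi_1,\dots,\varphi_n)\in\mathbb{R}^n$ and $b\in\mathbb{R}$, and define $h:\mathbb{R}\to\mathbb{R}$ by $$h(x)=\sin\Big(\sum_{i=1}^n a_i\sin(\omega_i x+\varphi_i)+b\Big).$$ Then for every $x\in\mathbb{R}$, $$h(x)=\sum_{\mathbf{k}\in\mathbb{Z}^n}\alpha_{\mathbf{k}}(a)\,\sin\Big(\sum_{i=1}^n k_i(\omega_i x+\varphi_i)+b\Big),\qquad \text{where } \alpha_{\mathbf{k}}(a)=\prod_{i=1}^n J_{k_i}(a_i).$$
   Context: For an integer $k$, $J_k$ denotes the Bessel function of the first kind of order $k$. The function $h$ is called a sinusoidal neuron of width $n$ with amplitudes $a$, frequencies $\omega$, phases $\varphi$ and bias $b$. Here $\mathbf{k}=(k_1,\dots,k_n)$. *)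

(* Defs.v *)
From HB Require Import structures.
From mathcomp Require Import all_boot all_order all_algebra.
From mathcomp Require Import all_classical all_reals all_analysis.
Set Implicit Arguments. Unset Strict Implicit. Unset Printing Implicit Defensive.
Import Order.TTheory GRing.Theory Num.Theory.
Import numFieldNormedType.Exports.
Local Open Scope ring_scope.

Definition bessel_term {R : realType} (k : nat) (x : R) (m : nat) : R :=
  (-1) ^+ m / ((m`!)%:R * ((m + k)`!)%:R) * (x / 2) ^+ (2 * m + k).

Definition besselJ_nat {R : realType} (k : nat) (x : R) : R :=
  limn (series (bessel_term k x)).

Definition besselJ {R : realType} (k : int) (x : R) : R :=
  match k with
  | Posz m => besselJ_nat m x
  | Negz m => (-1) ^+ m.+1 * besselJ_nat m.+1 x
  end.

Definition sin_neuron {R : realType} (n : nat) (a w phi : 'I_n -> R) (b : R)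
  (x : R) : R :=
  sin (\sum_(i < n) a i * sin (w i * x + phi i) + b).

Definition alpha {R : realType} (n : nat) (k : 'I_n -> int) (a : 'I_n -> R) : R :=
  \prod_(i < n) besselJ (k i) (a i).

Definition expansion_term {R : realType} (n : nat) (a w phi : 'I_n -> R) (b x : R)
  (k : 'I_n -> int) : R :=
  alpha k a * sin (\sum_(i < n) (k i)%:~R * (w i * x + phi i) + b).

(* sum of F over the box {-N,...,N}^n of Z^n *)
Definition box_sum {R : realType} (n N : nat) (F : ('I_n -> int) -> R) : R :=
  \sum_(k : {ffun 'I_n -> 'I_(2 * N).+1})
     F (fun i => (nat_of_ord (k i))%:Z - N%:Z).

(* Main.v *)
Require Import Defs.
From HB Require Import structures.
From mathcomp Require Import all_boot all_order all_algebra.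
From mathcomp Require Import all_classical all_reals all_analysis.
From mathcomp Require Import ring lra zify.
From mathcomp Require Import complex.
Import Order.TTheory GRing.Theory Num.Theory.
Import numFieldNormedType.Exports.
Local Open Scope classical_set_scope.
Local Open Scope ring_scope.
Section Main.
Variable R : realType.
Implicit Types (h : nat -> R) (t x : R).

Definition ecoef h (p : nat) : R := h p / p`!%:R.
Definition pser h t : R := limn (pseries (ecoef h) t).

Lemma ecoef_cvg h x : (forall p, `|h p| <= 1) -> cvgn (pseries (ecoef h) x).
Proof.
move=> hb; apply: normed_cvg.
apply: (series_le_cvg _ _ _ (is_cvg_series_exp_coeff `|x|)).
- by move=> n; rewrite normr_ge0.
- by move=> n; rewrite /exp_coeff divr_ge0 // exprn_ge0.
- move=> n /=; rewrite /exp_coeff /ecoef normrM normrX normrM.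
  rewrite [X in _ <= X]mulrC ler_wpM2r ?exprn_ge0 //.
  by rewrite [`|_^-1|]ger0_norm ?invr_ge0 //; apply: ler_piMl; rewrite ?invr_ge0.
Qed.

Lemma pseries_diffs_ecoef h : pseries_diffs (ecoef h) = ecoef (fun p => h p.+1).
Proof.
apply/funext => p; rewrite /pseries_diffs /ecoef factS natrM invfM.
have h1 : (p.+1)%:R != 0 :> R by rewrite pnatr_eq0.
have h2 : (p`!)%:R != 0 :> R by rewrite pnatr_eq0 -lt0n fact_gt0.
by field; apply/andP.
Qed.

Lemma is_derive_pser h t : (forall p, `|h p| <= 1) ->
  is_derive t 1 (pser h) (pser (fun p => h p.+1) t).
Proof.
move=> hb; rewrite /pser -pseries_diffs_ecoef.
apply: (pseries_snd_diffs (K := `|t| + 1)).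
- exact: ecoef_cvg.
- by rewrite pseries_diffs_ecoef; apply: ecoef_cvg.
- by rewrite !pseries_diffs_ecoef; apply: ecoef_cvg.
- by rewrite [X in _ < X]ger0_norm ?ltrDl // addr_ge0.
Qed.

Lemma pser0 h : pser h 0 = h 0%N.
Proof.
rewrite /pser; apply: lim_near_cst => //; near=> n.
rewrite /pseries /series /= -(prednK (_ : (0 < n)%N)); last by near: n; exists 1%N.
rewrite big_nat_recl // expr0 mulr1 big1 ?addr0; last by move=> i _; rewrite expr0n mulr0.
by rewrite /ecoef fact0 divr1.
Unshelve. all: by end_near.
Qed.

Lemma pser_lin h1 h2 k1 k2 t : (forall p, `|h1 p| <= 1) -> (forall p, `|h2 p| <= 1) ->
  pser (fun p => k1 * h1 p + k2 * h2 p) t = k1 * pser h1 t + k2 * pser h2 t.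
Proof.
move=> b1 b2; rewrite /pser.
have c1 := ecoef_cvg _ t b1; have c2 := ecoef_cvg _ t b2.
apply: cvg_lim => //.
have -> : pseries (ecoef (fun p => k1 * h1 p + k2 * h2 p)) t =
   (fun n => k1 * pseries (ecoef h1) t n + k2 * pseries (ecoef h2) t n).
  apply/funext => n; rewrite /pseries /series /= !mulr_sumr -big_split /=.
  by apply: eq_bigr => i _; rewrite /ecoef; ring.
by apply: cvgD; apply: cvgMr.
Qed.

Implicit Types (f g : R -> R).

Lemma dM f g x df dg : is_derive x 1 f df -> is_derive x 1 g dg ->
  is_derive x 1 (fun t => f t * g t) (df * g x + f x * dg).
Proof.
move=> Hf Hg; have := is_deriveM Hf Hg.
by move=> H; apply: (is_derive_eq H); rewrite /GRing.scale /=; ring.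
Qed.

Lemma dD f g x df dg : is_derive x 1 f df -> is_derive x 1 g dg ->
  is_derive x 1 (fun t => f t + g t) (df + dg).
Proof. by move=> Hf Hg; have := is_deriveD Hf Hg. Qed.

Lemma dB f g x df dg : is_derive x 1 f df -> is_derive x 1 g dg ->
  is_derive x 1 (fun t => f t - g t) (df - dg).
Proof. by move=> Hf Hg; have := is_deriveB Hf Hg. Qed.

Arguments dM {f g x df dg}.
Arguments dD {f g x df dg}.
Arguments dB {f g x df dg}.

Lemma dlin x s : is_derive x 1 (fun t => t * s) s.
Proof.
have H := is_deriveM (is_derive_id x (1:R)) (is_derive_cst s x (1:R)).
by apply: (is_derive_eq H); rewrite /GRing.scale /=; ring.
Qed.

Lemma dcomp f g x df dg : is_derive (g x) 1 f df -> is_derive x 1 g dg ->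
  is_derive x 1 (fun t => f (g t)) (df * dg).
Proof. by move=> Hf Hg; have := is_derive1_comp Hf Hg. Qed.
Arguments dcomp {f g x df dg}.


Lemma euler (t phi : R) :
  pser (fun p => cos (p%:R * phi)) t = expR (t * cos phi) * cos (t * sin phi) /\
  pser (fun p => sin (p%:R * phi)) t = expR (t * cos phi) * sin (t * sin phi).
Proof.
set c := cos phi; set s := sin phi.
set E := pser (fun p => cos (p%:R * phi)); set F := pser (fun p => sin (p%:R * phi)).
have bc : forall p : nat, `|cos (p%:R * phi)| <= 1 by move=> p; apply: cos_max.
have bs : forall p : nat, `|sin (p%:R * phi)| <= 1 by move=> p; apply: sin_max.
have dE : forall x, is_derive x 1 E (c * E x + (- s) * F x).
  move=> x; have := is_derive_pser _ x bc.
  rewrite (_ : (fun p => cos (p.+1%:R * phi)) =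
     (fun p => c * cos (p%:R * phi) + (- s) * sin (p%:R * phi))); last first.
    by apply/funext => p; rewrite -natr1 mulrDl mul1r cosD /c /s; ring.
  by rewrite pser_lin.
have dF : forall x, is_derive x 1 F (s * E x + c * F x).
  move=> x; have := is_derive_pser _ x bs.
  rewrite (_ : (fun p => sin (p.+1%:R * phi)) =
     (fun p => s * cos (p%:R * phi) + c * sin (p%:R * phi))); last first.
    by apply/funext => p; rewrite -natr1 mulrDl mul1r sinD /c /s; ring.
  by rewrite pser_lin.
pose P t := expR (t * - c) * (E t * cos (t * s) + F t * sin (t * s)).
pose Q t := expR (t * - c) * (F t * cos (t * s) - E t * sin (t * s)).
have dP : forall x, is_derive x 1 P 0.
  move=> x; rewrite /P.
  have H := dM (dcomp (is_derive_expR _) (dlin x (- c)))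
    (dD (dM (dE x) (dcomp (is_derive_cos _) (dlin x s)))
        (dM (dF x) (dcomp (is_derive_sin _) (dlin x s)))).
  by apply: (is_derive_eq H); ring.
have dQ : forall x, is_derive x 1 Q 0.
  move=> x; rewrite /Q.
  have H := dM (dcomp (is_derive_expR _) (dlin x (- c)))
    (dB (dM (dF x) (dcomp (is_derive_cos _) (dlin x s)))
        (dM (dE x) (dcomp (is_derive_sin _) (dlin x s)))).
  by apply: (is_derive_eq H); ring.
have E0 : E 0 = 1 by rewrite /E pser0 mul0r cos0.
have F0 : F 0 = 0 by rewrite /F pser0 mul0r sin0.
have P1 : P t = 1.
  by rewrite (is_derive_0_is_cst t 0 dP) /P !mul0r expR0 E0 F0 cos0 sin0; ring.
have Q0 : Q t = 0.
  by rewrite (is_derive_0_is_cst t 0 dQ) /Q !mul0r expR0 E0 F0 cos0 sin0; ring.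
have X0 : expR (t * - c) != 0 by rewrite gt_eqF // expR_gt0.
have eX : expR (t * c) = (expR (t * - c))^-1 by rewrite mulrN expRN invrK.
have A : E t * cos (t * s) + F t * sin (t * s) = expR (t * c).
  by rewrite eX -[RHS]mulr1 -P1 /P mulKf.
have B : F t * cos (t * s) - E t * sin (t * s) = 0.
  by move: Q0; rewrite /Q => /eqP; rewrite mulf_eq0 (negbTE X0) /= => /eqP.
have cs := cos2Dsin2 (t * s).
split.
- rewrite -A; apply/eqP; rewrite -subr_eq0; apply/eqP.
  transitivity (E t * (1 - (cos (t * s) ^+ 2 + sin (t * s) ^+ 2)) +
     - sin (t * s) * (F t * cos (t * s) - E t * sin (t * s))); first by ring.
  by rewrite cs B subrr; ring.
- rewrite -A; apply/eqP; rewrite -subr_eq0; apply/eqP.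
  transitivity (F t * (1 - (cos (t * s) ^+ 2 + sin (t * s) ^+ 2)) +
     cos (t * s) * (F t * cos (t * s) - E t * sin (t * s))); first by ring.
  by rewrite cs B subrr; ring.
Qed.
End Main.
Arguments ecoef {R}.
Arguments pser {R}.
Arguments ecoef_cvg {R}.
Arguments pser_lin {R}.
Arguments pser0 {R}.
Arguments euler {R}.
Arguments is_derive_pser {R}.

Section TwoD.
Variable R : realType.
Variable gam : nat -> R.
Hypothesis gam0 : forall p, 0 <= gam p.
Hypothesis gamc : cvgn (series gam).
Let G := limn (series gam).
Let S n := series gam n.

Lemma S_ndecr : {homo S : n m / (n <= m)%N >-> n <= m}.
Proof.
move=> n m nm; rewrite /S /series /= (big_cat_nat (leq0n n) nm) /= lerDl.
by apply: sumr_ge0 => i _.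
Qed.

Lemma S_le_G n : S n <= G.
Proof. exact: (nondecreasing_cvgn_le S_ndecr gamc n). Qed.

Lemma S_ge0 n : 0 <= S n.
Proof. by rewrite /S /series /=; apply: sumr_ge0. Qed.

Lemma G_ge0 : 0 <= G.
Proof. exact: le_trans (S_ge0 0) (S_le_G 0). Qed.

Lemma gam_le_G p : gam p <= G.
Proof.
apply: le_trans (S_le_G p.+1).
by rewrite /S /series /= big_nat_recr //= lerDr; apply: sumr_ge0.
Qed.

Lemma seg_le n e : \sum_(n <= i < e) gam i <= G - S n.
Proof.
case: (leqP n e) => ne.
  rewrite lerBrDl (le_trans _ (S_le_G e)) // /S /series /=.
  by rewrite (big_cat_nat (leq0n n) ne) /= addrC.
by rewrite big_geq ?subr_ge0 ?S_le_G // ltnW.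
Qed.

Lemma tau_cvg : (fun n => G - S n) @ \oo --> 0.
Proof.
rewrite -(subrr G); apply: cvgB; first exact: cvg_cst.
exact: gamc.
Qed.


Lemma diff_bound (F w : nat -> R) c0 A B : 0 <= c0 -> (forall m, `|F m| <= c0 * w m) ->
  `|\sum_(0 <= m < A) F m - \sum_(0 <= m < B) F m| <=
     c0 * \sum_(minn A B <= m < maxn A B) w m.
Proof.
move=> c00 Fb.
wlog AB : A B / (A <= B)%N.
  move=> H; case/orP: (leq_total A B) => [AB|BA]; first exact: H.
  by rewrite distrC minnC maxnC; apply: H.
rewrite (minn_idPl AB) (maxn_idPr AB) (big_cat_nat (leq0n A) AB) /=.
rewrite opprD addrA subrr sub0r normrN mulr_sumr.
apply: le_trans (ler_norm_sum _ _ _) _.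
by apply: ler_sum => i _.
Qed.

Lemma half (d M P : nat) (F : nat -> nat -> R) : (M + d <= P)%N ->
  (forall q m, `|F q m| <= gam q * gam (q + m + d)%N) ->
  `|\sum_(0 <= q < P) \sum_(0 <= m < M) F q m -
    \sum_(0 <= q < P) \sum_(0 <= m < P - q - d) F q m| <= G * (G - S (M + d)).
Proof.
move=> MP Fb; rewrite -sumrB; apply: le_trans (ler_norm_sum _ _ _) _.
apply: le_trans (_ : \sum_(0 <= q < P) gam q * (G - S (M + d)) <= _); last first.
  rewrite -mulr_suml; apply: ler_wpM2r; first by rewrite subr_ge0 S_le_G.
  exact: S_le_G.
apply: ler_sum_nat => q /andP[_ qP].
apply: le_trans (@diff_bound (F q) (fun m => gam (q + m + d)%N) _ _ _ (gam0 q) (Fb q)) _.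
apply: ler_wpM2l; first exact: gam0.
set mn := minn _ _; set mx := maxn _ _.
have -> : \sum_(mn <= m < mx) gam (q + m + d)%N =
    \sum_(mn + (q + d) <= i < mx + (q + d)) gam i.
  rewrite big_addn addnK; apply: eq_bigr => i _; congr gam; lia.
apply: le_trans (seg_le _ _) _.
rewrite lerD2l lerN2; apply: S_ndecr; rewrite /mn; lia.
Qed.

End TwoD.

Section Decomp.
Variable R : realType.

Lemma sq_decomp (T : nat -> nat -> R) P :
  \sum_(0 <= p < P) \sum_(0 <= q < P) T p q =
  \sum_(0 <= q < P) \sum_(0 <= m < P - q - 0) T (q + m)%N q +
  \sum_(0 <= q < P) \sum_(0 <= m < P - q - 1) T q (q + m + 1)%N.
Proof.
elim: P => [|P IH]; first by rewrite !big_geq // addr0.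
have E0 : \sum_(0 <= p < P) \sum_(0 <= q < P.+1) T p q =
   \sum_(0 <= p < P) (\sum_(0 <= q < P) T p q + T p P).
  by apply: eq_big_nat => p _; rewrite big_nat_recr.
have E1 : \sum_(0 <= q < P) \sum_(0 <= m < P.+1 - q - 0) T (q + m)%N q =
   \sum_(0 <= q < P) (\sum_(0 <= m < P - q - 0) T (q + m)%N q + T P q).
  apply: eq_big_nat => q /andP[_ qP].
  rewrite (_ : (P.+1 - q - 0 = (P - q - 0).+1)%N); last by lia.
  by rewrite big_nat_recr //=; congr (_ + _); congr T; lia.
have E2 : \sum_(0 <= q < P) \sum_(0 <= m < P.+1 - q - 1) T q (q + m + 1)%N =
   \sum_(0 <= q < P) (\sum_(0 <= m < P - q - 1) T q (q + m + 1)%N + T q P).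
  apply: eq_big_nat => q /andP[_ qP].
  rewrite (_ : (P.+1 - q - 1 = (P - q - 1).+1)%N); last by lia.
  by rewrite big_nat_recr //=; congr (_ + _); congr T; lia.
rewrite big_nat_recr //= E0 big_split /= IH.
rewrite [in RHS]big_nat_recr //= E1 big_split /=.
rewrite [X in _ = _ + X]big_nat_recr //= E2 big_split /=.
rewrite (_ : (P.+1 - P - 0 = 1)%N); last by lia.
rewrite (_ : (P.+1 - P - 1 = 0)%N); last by lia.
rewrite big_nat_recr //= big_nat1 [\sum_(0 <= m < 0) _]big_geq // addn0; ring.
Qed.


Lemma int_reindex (f : int -> R) N :
  \sum_(0 <= j < (2 * N).+1) f (j%:Z - N%:Z) =
  \sum_(0 <= m < N.+1) f (Posz m) + \sum_(0 <= m < N) f (Negz m).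
Proof.
elim: N => [|N IH].
  by rewrite muln0 !big_nat1 big_geq // !addr0.
rewrite (_ : ((2 * N.+1).+1 = ((2 * N).+1).+2)%N); last by lia.
rewrite big_nat_recl // big_nat_recr //=.
have -> : \sum_(0 <= i < (2 * N).+1) f ((i.+1)%:Z - (N.+1)%:Z) =
          \sum_(0 <= j < (2 * N).+1) f (j%:Z - N%:Z).
  by apply: eq_bigr => i _; congr f; lia.
rewrite IH [in RHS]big_nat_recr //= [X in _ = _ + X]big_nat_recr //=.
have -> : (0%:Z - (N.+1)%:Z) = Negz N by rewrite NegzE; lia.
have -> : (((2 * N).+2)%:Z - (N.+1)%:Z) = Posz N.+1 by lia.
ring.
Qed.

End Decomp.

Section SumLim.
Variable R : realType.
Lemma cvg_sum_seq (I : Type) (r : seq I) (u : I -> nat -> R) (l : I -> R) :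
  (forall i, u i @ \oo --> l i) ->
  (fun P => \sum_(i <- r) u i P) @ \oo --> \sum_(i <- r) l i.
Proof.
move=> H; elim: r => [|i r IH].
  by rewrite big_nil; under eq_fun do rewrite big_nil; exact: cvg_cst.
rewrite big_cons; under eq_fun do rewrite big_cons.
exact: cvgD.
Qed.
End SumLim.

Definition Dk {R : realType} (T : nat -> nat -> R) (k : int) (q : nat) : R :=
  match k with Posz m => T (q + m)%N q | Negz m => T q (q + m + 1)%N end.

Section Band.
Variable R : realType.
Variable gam : nat -> R.
Hypothesis gam0 : forall p, 0 <= gam p.
Hypothesis gamc : cvgn (series gam).
Let G := limn (series gam).
Let S n := series gam n.
Variable T : nat -> nat -> R.
Hypothesis Tb : forall p q, `|T p q| <= gam p * gam q.

Lemma Dk_bound k q : `|Dk T k q| <= G * gam q.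
Proof.
case: k => m /=.
  by apply: le_trans (Tb _ _) _; apply: ler_wpM2r => //; apply: gam_le_G.
by apply: le_trans (Tb _ _) _; rewrite mulrC; apply: ler_wpM2r => //; apply: gam_le_G.
Qed.

Lemma Dk_cvg k : cvgn (series (Dk T k)).
Proof.
apply: normed_cvg.
apply: (series_le_cvg _ _ _ (is_cvg_seriesZ (k := G) gamc)).
- by move=> n; rewrite normr_ge0.
- by move=> n /=; rewrite mulr_ge0 // G_ge0.
- by move=> n /=; apply: Dk_bound.
Qed.

Lemma band_decomp N P :
  \sum_(0 <= j < (2 * N).+1) series (Dk T (j%:Z - N%:Z)) P =
  \sum_(0 <= q < P) \sum_(0 <= m < N.+1) T (q + m)%N q +
  \sum_(0 <= q < P) \sum_(0 <= m < N) T q (q + m + 1)%N.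
Proof.
rewrite (@int_reindex R (fun k => series (Dk T k) P)) /series /=.
by rewrite !(exchange_big_nat _ 0 _ 0 P).
Qed.

Lemma band_close N P : (N.+1 <= P)%N ->
  `|\sum_(0 <= j < (2 * N).+1) series (Dk T (j%:Z - N%:Z)) P -
    \sum_(0 <= p < P) \sum_(0 <= q < P) T p q| <= (G * (G - S N.+1)) *+ 2.
Proof.
move=> NP; rewrite band_decomp sq_decomp.
set a := \sum_(0 <= q < P) _; set b := \sum_(0 <= q < P) _.
set c := \sum_(0 <= q < P) _; set d := \sum_(0 <= q < P) _.
have -> : a + b - (c + d) = (a - c) + (b - d) by ring.
apply: le_trans (ler_normD _ _) _; rewrite mulr2n; apply: lerD.
- have := @half R gam gam0 gamc 0 N.+1 P (fun q m => T (q + m)%N q).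
  rewrite addn0; apply => // q m; rewrite addn0 mulrC; exact: Tb.
- have := @half R gam gam0 gamc 1 N P (fun q m => T q (q + m + 1)%N).
  rewrite addn1; apply => //; by move=> q m; exact: Tb.
Qed.


Lemma band_limit (L : R) :
  (fun P => \sum_(0 <= p < P) \sum_(0 <= q < P) T p q) @ \oo --> L ->
  (fun N => \sum_(0 <= j < (2 * N).+1) limn (series (Dk T (j%:Z - N%:Z)))) @ \oo --> L.
Proof.
move=> HL; set B := fun N => _.
have bnd N : `|B N - L| <= 2 * G * (G - S N.+1).
  have cv : (fun P => `|\sum_(0 <= j < (2 * N).+1) series (Dk T (j%:Z - N%:Z)) P -
       \sum_(0 <= p < P) \sum_(0 <= q < P) T p q| : R) @ \oo --> (`|B N - L| : R).
    apply: cvg_norm; apply: cvgB => //.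
    by apply: cvg_sum_seq => j; exact: Dk_cvg.
  rewrite -(cvg_lim _ cv) //; apply: limr_le; first by apply/cvg_ex; exists `|B N - L|.
  near=> P; rewrite -mulrA mulr_natl; apply: band_close; near: P.
  by exists N.+1.
have t1 : (fun N => 2 * G * (G - S N.+1)) @ \oo --> 0.
  rewrite -(mulr0 (2 * G)); apply: cvgMr.
  by rewrite (cvg_shiftS (fun N => G - S N)); exact: tau_cvg.
have t2 : (fun N => - (2 * G * (G - S N.+1))) @ \oo --> 0.
  by rewrite -oppr0; apply: cvgN.
have H0 : (fun N => B N - L) @ \oo --> 0.
  apply: (squeeze_cvgr _ t2 t1); near=> N; rewrite -ler_norml; exact: bnd.
exact: (cvg_sub0 H0 (cvg_cst L)).
Unshelve. all: by end_near.
Qed.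


Lemma inner_le q M d : \sum_(0 <= m < M) gam (q + m + d)%N <= G.
Proof.
have -> : \sum_(0 <= m < M) gam (q + m + d)%N =
    \sum_(0 + (q + d) <= i < M + (q + d)) gam i.
  rewrite big_addn addnK; apply: eq_bigr => i _; congr gam; lia.
apply: le_trans (@seg_le R gam gam0 gamc _ _) _.
by rewrite lerBlDr lerDl (@S_ge0 R gam gam0).
Qed.

Lemma dbl_le M d (F : nat -> nat -> R) P :
  (forall q m, `|F q m| <= gam q * gam (q + m + d)%N) ->
  \sum_(0 <= q < P) \sum_(0 <= m < M) `|F q m| <= G * G.
Proof.
move=> Fb; apply: le_trans (_ : \sum_(0 <= q < P) gam q * G <= _).
  apply: ler_sum_nat => q _; apply: le_trans (_ : gam q * \sum_(0 <= m < M) gam (q + m + d)%N <= _).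
    by rewrite mulr_sumr; apply: ler_sum_nat => m _; apply: Fb.
  by apply: ler_wpM2l => //; apply: inner_le.
rewrite -mulr_suml; apply: ler_wpM2r; first exact: (@G_ge0 R gam gam0 gamc).
exact: (@S_le_G R gam gam0 gamc).
Qed.

Lemma band_abs_bound N :
  \sum_(0 <= j < (2 * N).+1) `|limn (series (Dk T (j%:Z - N%:Z)))| <= 2 * (G * G).
Proof.
have cv : (fun P => \sum_(0 <= j < (2 * N).+1) `|series (Dk T (j%:Z - N%:Z)) P| : R)
    @ \oo --> \sum_(0 <= j < (2 * N).+1) `|limn (series (Dk T (j%:Z - N%:Z)))|.
  by apply: cvg_sum_seq => j; apply: cvg_norm; exact: Dk_cvg.
rewrite -(cvg_lim _ cv) //; apply: limr_le; first by apply/cvg_ex; eexists; exact: cv.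
near=> P.
apply: le_trans (_ : \sum_(0 <= j < (2 * N).+1) series (Dk (fun p q => `|T p q|) (j%:Z - N%:Z)) P <= _).
  apply: ler_sum_nat => j _; rewrite /series /=.
  apply: le_trans (ler_norm_sum _ _ _) _; apply: ler_sum_nat => q _.
  by case: (_ - _)%R => m.
rewrite (@int_reindex R (fun k => series (Dk (fun p q => `|T p q|) k) P)) /series /=.
rewrite !(exchange_big_nat _ 0 _ 0 P) -[2]/(1 + 1) mulrDl mul1r; apply: lerD.
- by apply: (@dbl_le _ 0) => q m; rewrite addn0 mulrC; exact: Tb.
- by apply: (@dbl_le _ 1) => q m; exact: Tb.
Unshelve. all: by end_near.
Qed.

End Band.

Lemma lim_seriesMl {R : realType} (u : nat -> R) (k : R) : cvgn (series u) ->
  limn (series (fun q => k * u q)) = k * limn (series u).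
Proof.
move=> cu; apply: cvg_lim => //.
have -> : series (fun q => k * u q) = (fun n => k * series u n).
  by apply/funext => n; rewrite /series /= mulr_sumr.
exact: cvgMr.
Qed.

Section OneD.
Variable R : realType.
Variables (a : R).
Let t := a / 2.
Let cc (p : nat) : R := t ^+ p / p`!%:R.
Let gam p := `|cc p|.

Lemma gam0' p : 0 <= gam p. Proof. exact: normr_ge0. Qed.

Lemma gamE : gam = exp_coeff `|t|.
Proof.
apply/funext => p; rewrite /gam /cc /exp_coeff normrM normrX normfV.
by rewrite [`|p`!%:R|]ger0_norm.
Qed.

Lemma gamc' : cvgn (series gam).
Proof. by rewrite gamE; exact: is_cvg_series_exp_coeff. Qed.

Lemma fact_neq0 n : (n`!)%:R != 0 :> R.
Proof. by rewrite pnatr_eq0 -lt0n fact_gt0. Qed.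

Lemma cc_mul q m : cc (q + m)%N * cc q =
  (q`!%:R * (q + m)`!%:R)^-1 * t ^+ (2 * q + m).
Proof.
rewrite /cc (_ : (2 * q + m = (q + m) + q)%N); last by lia.
by rewrite [in RHS]exprD invfM; ring.
Qed.

Lemma bessel_cvg m : cvgn (series (bessel_term m a)).
Proof.
pose T1 p q := (-1) ^+ q * cc p * cc q.
have Tb1 : forall p q, `|T1 p q| <= gam p * gam q.
  by move=> p q; rewrite /T1 /gam !normrM normrX normrN normr1 expr1n mul1r.
have := @Dk_cvg R gam gam0' gamc' T1 Tb1 (Posz m).
have -> // : Dk T1 (Posz m) = bessel_term m a.
apply/funext => q; rewrite /Dk /T1 /bessel_term /= -(mulrA ((-1) ^+ q)) cc_mul.
by rewrite -/t; ring.
Qed.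

Variable g : int -> R.
Let T p q := (-1) ^+ q * cc p * cc q * g (p%:Z - q%:Z).

Lemma Tb (gb : forall k, `|g k| <= 1) p q : `|T p q| <= gam p * gam q.
Proof.
have -> : `|T p q| = gam p * gam q * `|g (p%:Z - q%:Z)|.
  by rewrite /T /gam !normrM normrX normrN normr1 expr1n mul1r.
rewrite -[X in _ <= X]mulr1; apply: ler_wpM2l => //.
by rewrite mulr_ge0 // normr_ge0.
Qed.

Lemma Dk_lim k : limn (series (Dk T k)) = besselJ k a * g k.
Proof.
case: k => m /=.
  have -> : Dk T (Posz m) = (fun q => g m * bessel_term m a q).
    apply/funext => q; rewrite /Dk /T /bessel_term /= -(mulrA ((-1) ^+ q)) cc_mul.
    rewrite (_ : ((q + m)%N%:Z - q%:Z) = m%:Z); last by lia.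
    rewrite -/t; ring.
  rewrite lim_seriesMl /besselJ_nat; first by rewrite mulrC.
  exact: bessel_cvg.
have -> : Dk T (Negz m) = (fun q => ((-1) ^+ m.+1 * g (Negz m)) * bessel_term m.+1 a q).
  apply/funext => q; rewrite /Dk /T /bessel_term /=.
  rewrite (_ : (q%:Z - (q + m + 1)%N%:Z) = Negz m); last by rewrite NegzE; lia.
  rewrite (_ : (q + m + 1 = q + m.+1)%N); last by lia.
  rewrite -(mulrA ((-1) ^+ (q + m.+1))) [cc q * _]mulrC cc_mul exprD -/t; ring.
rewrite lim_seriesMl /besselJ_nat; first by ring.
exact: bessel_cvg.
Qed.

End OneD.

Section SqLim.
Variable R : realType.
Variables (a th b : R).

Lemma sq_lim :
  (fun P => \sum_(0 <= p < P) \sum_(0 <= q < P)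
     ((-1) ^+ q * ((a / 2) ^+ p / p`!%:R) * ((a / 2) ^+ q / q`!%:R) *
      sin ((p%:Z - q%:Z)%:~R * th + b))) @ \oo --> sin (a * sin th + b).
Proof.
set t := a / 2.
pose hc := fun p : nat => cos (p%:R * th).
pose hs := fun p : nat => sin (p%:R * th).
pose hcb := fun q : nat => cos (b - q%:R * th).
pose hsb := fun q : nat => sin (b - q%:R * th).
have bc : forall p, `|hc p| <= 1 by move=> p; exact: cos_max.
have bs : forall p, `|hs p| <= 1 by move=> p; exact: sin_max.
have bcb : forall p, `|hcb p| <= 1 by move=> p; exact: cos_max.
have bsb : forall p, `|hsb p| <= 1 by move=> p; exact: sin_max.
have decomp : forall P, \sum_(0 <= p < P) \sum_(0 <= q < P)
     ((-1) ^+ q * (t ^+ p / p`!%:R) * (t ^+ q / q`!%:R) *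
      sin ((p%:Z - q%:Z)%:~R * th + b)) =
   pseries (ecoef hs) t P * pseries (ecoef hcb) (- t) P +
   pseries (ecoef hc) t P * pseries (ecoef hsb) (- t) P.
  move=> P; rewrite /pseries /series /= !mulr_suml -big_split; apply: eq_bigr => p _.
  rewrite !mulr_sumr -big_split; apply: eq_bigr => q _.
  rewrite /ecoef /hs /hc /hcb /hsb rmorphB /= (exprNn t).
  rewrite (_ : (p%:R - q%:R) * th + b = p%:R * th + (b - q%:R * th)); last by ring.
  rewrite (sinD (p%:R * th)); ring.
rewrite (funext decomp).
have val : pser hs t * pser hcb (- t) + pser hc t * pser hsb (- t) =
    sin (a * sin th + b).
  rewrite (_ : hcb = fun q => cos b * hc q + sin b * hs q); last first.
    by apply/funext => q; rewrite /hcb cosB.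
  rewrite (_ : hsb = fun q => sin b * hc q + (- cos b) * hs q); last first.
    by apply/funext => q; rewrite /hsb /hc /hs sinB; ring.
  rewrite !pser_lin // /hc /hs.
  have [E1 F1] := euler t th; have [E2 F2] := euler (- t) th.
  rewrite E1 F1 E2 F2 !mulNr cosN sinN.
  rewrite (_ : a * sin th + b = (t * sin th + t * sin th) + b); last first.
    by rewrite /t; field.
  rewrite sinD sinD cosD.
  set X := expR (t * cos th); set X' := expR (- (t * cos th)).
  have XX : X * X' = 1 by rewrite /X /X' expRxMexpNx_1.
  set u := t * sin th.
  transitivity (X * X' * (sin u * (cos b * cos u - sin b * sin u) +
     cos u * (sin b * cos u + cos b * sin u))); first by ring.
  by rewrite XX mul1r; ring.
rewrite -val; apply: cvgD; apply: cvgM; exact: ecoef_cvg.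
Qed.
End SqLim.

Section JA.
Variable R : realType.

Lemma JA1 (a th b : R) :
  (fun N => \sum_(0 <= j < (2 * N).+1)
     besselJ (j%:Z - N%:Z) a * sin ((j%:Z - N%:Z)%:~R * th + b)) @ \oo -->
  sin (a * sin th + b).
Proof.
pose g := fun k : int => sin (k%:~R * th + b).
have gb : forall k, `|g k| <= 1 by move=> k; exact: sin_max.
pose T := fun p q : nat => (-1) ^+ q * ((a / 2) ^+ p / p`!%:R) *
   ((a / 2) ^+ q / q`!%:R) * g (p%:Z - q%:Z).
have e : forall k, besselJ k a * sin (k%:~R * th + b) = limn (series (Dk T k)).
  by move=> k; exact: (esym (@Dk_lim R a g k)).
under eq_fun do under eq_bigr do rewrite e.
have H := (@band_limit R _ (@gam0' R a) (@gamc' R a) _ (@Tb R a g gb) _ (@sq_lim R a th b)).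
exact: H.
Qed.

Lemma JA1_bound (a : R) : exists M : R, forall N,
  \sum_(0 <= j < (2 * N).+1) `|besselJ (j%:Z - N%:Z) a| <= M.
Proof.
pose g := fun k : int => (1 : R).
have gb : forall k, `|g k| <= 1 by move=> k; rewrite normr1.
pose T := fun p q : nat => (-1) ^+ q * ((a / 2) ^+ p / p`!%:R) *
   ((a / 2) ^+ q / q`!%:R) * g (p%:Z - q%:Z).
have e : forall k, besselJ k a = limn (series (Dk T k)).
  by move=> k; rewrite -[LHS]mulr1; exact: (esym (@Dk_lim R a g k)).
eexists => N.
under eq_bigr do rewrite e.
exact: (@band_abs_bound R _ (@gam0' R a) (@gamc' R a) _ (@Tb R a g gb) N).
Qed.

End JA.

Section Cx.
Variable R : realType.
Definition ex (x : R) : R[i] := Complex (cos x) (sin x).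
Lemma ReM (x y : R[i]) : complex.Re (x * y) = complex.Re x * complex.Re y - complex.Im x * complex.Im y.
Proof. by case: x => a b; case: y => c d. Qed.
Lemma ImM (x y : R[i]) : complex.Im (x * y) = complex.Re x * complex.Im y + complex.Im x * complex.Re y.
Proof. by case: x => a b; case: y => c d. Qed.
Lemma exD x y : ex (x + y) = ex x * ex y.
Proof. by apply/eqP; rewrite eq_complex /= cosD sinD; apply/andP; split; apply/eqP; ring. Qed.
Lemma ex0 : ex 0 = 1.
Proof. by rewrite /ex cos0 sin0. Qed.
Lemma ImD (x y : R[i]) : complex.Im (x + y) = complex.Im x + complex.Im y.
Proof. by case: x => a b; case: y => c d. Qed.
Lemma ReD (x y : R[i]) : complex.Re (x + y) = complex.Re x + complex.Re y.
Proof. by case: x => a b; case: y => c d. Qed.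

Lemma Im_sum I (r : seq I) (F : I -> R[i]) :
  complex.Im (\sum_(i <- r) F i) = \sum_(i <- r) complex.Im (F i).
Proof. by apply: (big_morph _ ImD). Qed.
Lemma Re_sum I (r : seq I) (F : I -> R[i]) :
  complex.Re (\sum_(i <- r) F i) = \sum_(i <- r) complex.Re (F i).
Proof. by apply: (big_morph _ ReD). Qed.
Lemma ex_sum I (r : seq I) (F : I -> R) :
  ex (\sum_(i <- r) F i) = \prod_(i <- r) ex (F i).
Proof. by apply: (big_morph _ exD ex0). Qed.
Lemma realC_prod I (r : seq I) (F : I -> R) :
  \prod_(i <- r) (Complex (F i) 0) = Complex (\prod_(i <- r) F i) 0.
Proof.
elim: r => [|i r IH]; first by rewrite !big_nil.
by rewrite !big_cons IH; apply/eqP; rewrite eq_complex /= !mulr0 mul0r subr0 addr0 !eqxx.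
Qed.

Definition ccvg (u : nat -> R[i]) (z : R[i]) :=
  (fun N => complex.Re (u N)) @ \oo --> complex.Re z /\
  (fun N => complex.Im (u N)) @ \oo --> complex.Im z.

Lemma ccvgM u v z y : ccvg u z -> ccvg v y -> ccvg (fun N => u N * v N) (z * y).
Proof.
move=> [u1 u2] [v1 v2]; split.
  under eq_fun do rewrite ReM; rewrite ReM; apply: cvgB; exact: cvgM.
under eq_fun do rewrite ImM; rewrite ImM; apply: cvgD; exact: cvgM.
Qed.

Lemma ccvg_cst z : ccvg (fun _ => z) z.
Proof. by split; exact: cvg_cst. Qed.

Lemma ccvg_prod I (r : seq I) (F : I -> nat -> R[i]) L :
  (forall i, ccvg (F i) (L i)) ->
  ccvg (fun N => \prod_(i <- r) F i N) (\prod_(i <- r) L i).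
Proof.
move=> H; elim: r => [|i r IH].
  rewrite big_nil; under eq_fun do rewrite big_nil; exact: ccvg_cst.
rewrite big_cons; under eq_fun do rewrite big_cons; exact: ccvgM.
Qed.
End Cx.
Arguments ex {R}.
Arguments ccvg {R}.
Arguments ccvgM {R u v z y}.
Arguments ccvg_cst {R}.
Arguments ccvg_prod {R I}.

Definition Jbound {R : realType} (a : R) : R :=
  2 * (limn (series (fun p : nat => `|(a / 2) ^+ p / p`!%:R|)) *
       limn (series (fun p : nat => `|(a / 2) ^+ p / p`!%:R|))).

Section Final.
Variable R : realType.

Lemma JA1_bound' (a : R) N :
  \sum_(0 <= j < (2 * N).+1) `|besselJ (j%:Z - N%:Z) a| <= Jbound a.
Proof.
pose g := fun k : int => (1 : R).
have gb : forall k, `|g k| <= 1 by move=> k; rewrite normr1.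
pose T := fun p q : nat => (-1) ^+ q * ((a / 2) ^+ p / p`!%:R) *
   ((a / 2) ^+ q / q`!%:R) * g (p%:Z - q%:Z).
have e : forall k, besselJ k a = limn (series (Dk T k)).
  by move=> k; rewrite -[LHS]mulr1; exact: (esym (@Dk_lim R a g k)).
under eq_bigr do rewrite e.
exact: (@band_abs_bound R _ (@gam0' R a) (@gamc' R a) _ (@Tb R a g gb) N).
Qed.

Definition Zc (a th : R) (N : nat) : R[i] :=
  \sum_(j < (2 * N).+1) Complex (besselJ ((j : nat)%:Z - N%:Z) a) 0 *
     ex (((j : nat)%:Z - N%:Z)%:~R * th).

Lemma Zc_cvg a th : ccvg (Zc a th) (ex (a * sin th)).
Proof.
split.
- have -> : (fun N => complex.Re (Zc a th N)) = (fun N =>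
     \sum_(0 <= j < (2 * N).+1) besselJ (j%:Z - N%:Z) a *
        sin ((j%:Z - N%:Z)%:~R * th + pi / 2)).
    apply/funext => N; rewrite /Zc Re_sum big_mkord; apply: eq_bigr => j _.
    by rewrite ReM /= sinDpihalf mul0r subr0.
  by rewrite /= -sinDpihalf; exact: JA1.
- have -> : (fun N => complex.Im (Zc a th N)) = (fun N =>
     \sum_(0 <= j < (2 * N).+1) besselJ (j%:Z - N%:Z) a *
        sin ((j%:Z - N%:Z)%:~R * th + 0)).
    apply/funext => N; rewrite /Zc Im_sum big_mkord; apply: eq_bigr => j _.
    by rewrite ImM /= addr0 mul0r addr0.
  by rewrite /= -[in X in _ --> X](addr0 (a * sin th)); exact: JA1.
Qed.

End Final.
Arguments Zc {R}.
Arguments Zc_cvg {R}.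

Theorem theorem1 (R : realType) (n : nat) (hn : (1 <= n)%N)
  (a w phi : 'I_n -> R) (b : R) :
  forall x : R,
    (exists M : R, forall N : nat,
        box_sum N (fun k => `|expansion_term a w phi b x k|) <= M) /\
    ((fun N : nat => box_sum N (expansion_term a w phi b x)) @ \oo
       --> sin_neuron a w phi b x).
Proof.
move=> x; split.
- exists (\prod_(i < n) Jbound (a i)) => N; rewrite /box_sum.
  apply: le_trans (_ : \sum_(k : {ffun 'I_n -> 'I_(2 * N).+1})
      \prod_(i < n) `|besselJ ((k i : nat)%:Z - N%:Z) (a i)| <= _).
    apply: ler_sum => k _; rewrite /expansion_term /alpha normrM normr_prod.
    apply: ler_piMr; first by apply: prodr_ge0 => i _.
    exact: sin_max.
  rewrite -(bigA_distr_bigA (fun i (j : 'I_(2 * N).+1) =>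
      `|besselJ ((j : nat)%:Z - N%:Z) (a i)|)) /=.
  apply: ler_prod => i _; apply/andP; split; first by apply: sumr_ge0.
  rewrite -(big_mkord xpredT (fun j => `|besselJ (j%:Z - N%:Z) (a i)|)).
  exact: JA1_bound'.
- pose th i := w i * x + phi i.
  have eq : forall N, box_sum N (expansion_term a w phi b x) =
      complex.Im (ex b * \prod_(i < n) Zc (a i) (th i) N).
    move=> N; rewrite /Zc bigA_distr_bigA mulr_sumr Im_sum /box_sum.
    apply: eq_bigr => k _; rewrite big_split /= realC_prod -ex_sum.
    rewrite /expansion_term /alpha ImM /= mul0r addr0.
    by rewrite mul0r subr0 sinD /th; ring.
  rewrite (funext eq).
  have L := ccvgM (ccvg_cst (ex b)) (ccvg_prod (index_enum 'I_n) _ _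
     (fun i => Zc_cvg (a i) (th i))).
  move: L.2; rewrite -ex_sum -exD /= /sin_neuron addrC.
  by [].
Qed.
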